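(* Let $S=\{e_1,\dots,e_k\}\subseteq\mathbb{N}$ be a set of $k\geq1$ distinct elements with $e_k=\max(S)$, and let $b\geq 1$. Then $$\int_{1-\frac1b}^{1}\sqrt{\mathcal{I}(g_S)(t)}\,\mathrm{d}t\leq\frac{2(k+1)e_k}{b}.$$
   Context: $\mathbb{N}=\{0,1,2,\dots\}$. Define $g_S(t)=\sum_{e\in S}t^{2e}$. For a positive twice differentiable function $g$ on an interval contained in $(0,\infty)$, define $\mathcal{I}(g)(t):=(\log g)''(t)+\frac{(\log g)'(t)}{t}$ (this is nonnegative for $g=g_S$). *)

(* Defs.v *)
From Stdlib Require Import Reals List.
Open Scope R_scope.

(* A finite set S of naturals is represented by a duplicate-free list. *)
Definition gS (S : list nat) (t : R) : R :=
  fold_right (fun e acc => t ^ (2 * e) + acc) 0 S.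

(* max(S) (0 for the empty list, never used there) *)
Definition maxS (S : list nat) : nat := fold_right Nat.max 0%nat S.

Definition log_derivs (g dl ddl : R -> R) : Prop :=
  forall t, 0 < t ->
    derivable_pt_lim (fun s => ln (g s)) t (dl t) /\
    derivable_pt_lim dl t (ddl t).

Definition Iop (dl ddl : R -> R) (t : R) : R := ddl t + dl t / t.

(* Main.v *)
Require Import Defs.
From Coquelicot Require Import Coquelicot.
From Stdlib Require Import Reals List Lra Lia.
Open Scope R_scope.

Definition lsum (L : list nat) (f : nat -> R) : R :=
  fold_right (fun x acc => f x + acc) 0 L.

Lemma isd_ext (f : R -> R) (x l l' : R) : is_derive f x l -> l = l' -> is_derive f x l'.
Proof. intros H ->; exact H. Qed.

Lemma isd_plus (f g : R -> R) x df dg : is_derive f x df -> is_derive g x dg ->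
  is_derive (fun s => f s + g s) x (df + dg).
Proof. intros; apply (is_derive_plus f g x df dg); auto. Qed.

Lemma isd_mult (f g : R -> R) x df dg : is_derive f x df -> is_derive g x dg ->
  is_derive (fun s => f s * g s) x (df * g x + f x * dg).
Proof. intros; apply (is_derive_mult f g x df dg); auto. intros; apply Rmult_comm. Qed.

Lemma lsum_derive (L : list nat) (f : nat -> R -> R) (f' : nat -> R) x :
  (forall d, is_derive (f d) x (f' d)) ->
  is_derive (fun s => lsum L (fun d => f d s)) x (lsum L f').
Proof.
  intros H; induction L as [|d L IH]; simpl.
  - apply isd_ext with 0. apply is_derive_Reals, derivable_pt_lim_const. reflexivity.
  - apply isd_plus; auto.
Qed.

Lemma lsum_cont (L : list nat) (f : nat -> R -> R) x :
  (forall d, continuous (f d) x) ->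
  continuous (fun s => lsum L (fun d => f d s)) x.
Proof.
  intros H; induction L as [|d L IH]; simpl.
  - apply continuous_const.
  - apply (continuous_plus (fun s => f d s) (fun s => lsum L (fun d => f d s))); auto.
Qed.

Lemma lsum_ext L f g : (forall d, f d = g d) -> lsum L f = lsum L g.
Proof. intros H; induction L; simpl; congruence. Qed.

Lemma lsum_plus L f g : lsum L (fun d => f d + g d) = lsum L f + lsum L g.
Proof. induction L; simpl; lra. Qed.

Lemma lsum_minus L f g : lsum L (fun d => f d - g d) = lsum L f - lsum L g.
Proof. induction L; simpl; lra. Qed.

Lemma lsum_mult_r L f c : lsum L f * c = lsum L (fun d => f d * c).
Proof. induction L; simpl; lra. Qed.

Lemma lsum_mult_l L f c : c * lsum L f = lsum L (fun d => c * f d).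
Proof. induction L; simpl; lra. Qed.

Lemma lsum_swap A B (f : nat -> nat -> R) :
  lsum A (fun i => lsum B (fun j => f i j)) = lsum B (fun j => lsum A (fun i => f i j)).
Proof.
  induction A as [|a A IH]; simpl.
  - induction B; simpl; lra.
  - rewrite IH. rewrite <- lsum_plus. reflexivity.
Qed.

Lemma lsum_nonneg L f : (forall d, 0 <= f d) -> 0 <= lsum L f.
Proof. intros H; induction L; simpl; [lra| specialize (H a); lra]. Qed.

Lemma lsum_le L f g : (forall d, f d <= g d) -> lsum L f <= lsum L g.
Proof. intros H; induction L; simpl; [lra| specialize (H a); lra]. Qed.

Lemma lsum_sq L f : (forall d, 0 <= f d) -> lsum L (fun d => f d * f d) <= lsum L f * lsum L f.
Proof.
  intros H; induction L as [|a L IH]; simpl; [lra|].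
  pose proof (lsum_nonneg L f H). specialize (H a). nra.
Qed.

Lemma lsum_ge1 L f : (forall d, 0 <= f d) -> In 0%nat L -> f 0%nat = 1 -> 1 <= lsum L f.
Proof.
  intros H Hin H0; induction L as [|a L IH]; simpl in *; [tauto|].
  destruct Hin as [Ha|Hin]; [subst a|].
  - pose proof (lsum_nonneg L f H); lra.
  - specialize (H a); specialize (IH Hin); lra.
Qed.
Definition P0 L t := lsum L (fun d => t ^ (2 * d)).
Definition P1 L t := lsum L (fun d => 2 * INR d * t ^ (2 * d)).
Definition P2 L t := lsum L (fun d => 4 * INR d * INR d * t ^ (2 * d)).
Definition Qf L t := lsum L (fun i => lsum L (fun j =>
   2 * (INR i - INR j) ^ 2 * t ^ (2 * i + 2 * j - 2))).

Lemma pow_deriv_term d t : t <> 0 ->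
  is_derive (fun s => s ^ (2 * d)) t (2 * INR d * t ^ (2 * d) / t).
Proof.
  intros Ht. eapply isd_ext. apply is_derive_Reals, derivable_pt_lim_pow.
  destruct d as [|d].
  - simpl. field. auto.
  - replace (2 * S d)%nat with (S (S (2 * d))) by lia.
    simpl pred. rewrite !S_INR, mult_INR. change (INR 2) with 2.
    simpl (t ^ S _). field. auto.
Qed.

Lemma P0_deriv L t : t <> 0 -> is_derive (P0 L) t (P1 L t / t).
Proof.
  intros Ht. unfold P0, P1. eapply isd_ext.
  apply (lsum_derive L (fun d s => s ^ (2 * d))). intros d; apply pow_deriv_term; auto.
  unfold Rdiv. rewrite lsum_mult_r. reflexivity.
Qed.

Lemma P1_deriv L t : t <> 0 -> is_derive (P1 L) t (P2 L t / t).
Proof.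
  intros Ht. unfold P1, P2. eapply isd_ext.
  apply (lsum_derive L (fun d s => 2 * INR d * s ^ (2 * d))). intros d.
  apply is_derive_scal. apply pow_deriv_term; auto.
  unfold Rdiv. rewrite lsum_mult_r. apply lsum_ext. intros d. field. auto.
Qed.

Lemma term_id t i j : t ^ 2 * (2 * (INR i - INR j) ^ 2 * t ^ (2 * i + 2 * j - 2)) =
  2 * (INR i - INR j) ^ 2 * (t ^ (2 * i) * t ^ (2 * j)).
Proof.
  destruct (Nat.eq_dec (i + j) 0) as [H|H].
  - assert (i = 0%nat) by lia. assert (j = 0%nat) by lia. subst. simpl. ring.
  - rewrite <- pow_add. replace (2 * i + 2 * j)%nat with (2 + (2 * i + 2 * j - 2))%nat at 2 by lia.
    rewrite pow_add. ring.
Qed.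

Lemma lsum_prod A B f g : lsum A f * lsum B g = lsum A (fun i => lsum B (fun j => f i * g j)).
Proof. rewrite lsum_mult_r. apply lsum_ext. intros i. apply lsum_mult_l. Qed.

Lemma lagrange L t : P0 L t * P2 L t - P1 L t * P1 L t = t ^ 2 * Qf L t.
Proof.
  unfold P0, P1, P2, Qf.
  rewrite !lsum_prod. rewrite (lsum_mult_l L _ (t^2)).
  rewrite (lsum_ext L (fun i => t ^ 2 * _) (fun i => lsum L (fun j =>
     2 * (INR i - INR j) ^ 2 * (t ^ (2 * i) * t ^ (2 * j))))).
  2:{ intros i. rewrite lsum_mult_l. apply lsum_ext. intros j. apply term_id. }
  rewrite <- lsum_minus.
  set (u := fun i j => 2 * INR i * INR i * (t ^ (2 * i) * t ^ (2 * j))).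
  transitivity (lsum L (fun i => lsum L (fun j => 2 * (INR i - INR j) ^ 2 * (t ^ (2 * i) * t ^ (2 * j)) + (u j i - u i j)))).
  - apply lsum_ext; intros i. rewrite <- lsum_minus. apply lsum_ext; intros j. unfold u. ring.
  - rewrite (lsum_ext L _ (fun i => lsum L (fun j => 2 * (INR i - INR j) ^ 2 * (t ^ (2 * i) * t ^ (2 * j))) + (lsum L (fun j => u j i) - lsum L (fun j => u i j)))).
    2:{ intros i. rewrite lsum_plus, lsum_minus. reflexivity. }
    rewrite lsum_plus, lsum_minus. rewrite (lsum_swap L L (fun i j => u j i)). ring.
Qed.

Definition minS (S : list nat) : nat := fold_right Nat.min (hd 0%nat S) S.
Definition Sd (S : list nat) := map (fun e => (e - minS S)%nat) S.

Lemma fold_min_le x0 S e : In e S -> (fold_right Nat.min x0 S <= e)%nat.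
Proof. induction S; simpl; intros H; [tauto|]. destruct H; [subst; lia|]. specialize (IHS H); lia. Qed.

Lemma fold_min_in x0 S : fold_right Nat.min x0 S = x0 \/ In (fold_right Nat.min x0 S) S.
Proof.
  induction S; simpl; [auto|].
  destruct (Nat.min_spec a (fold_right Nat.min x0 S)) as [[_ ->]|[_ ->]]; auto.
  destruct IHS; auto.
Qed.

Lemma minS_le S e : In e S -> (minS S <= e)%nat.
Proof. apply fold_min_le. Qed.

Lemma minS_in S : S <> nil -> In (minS S) S.
Proof.
  intros H. unfold minS. destruct (fold_min_in (hd 0%nat S) S) as [->|]; auto.
  destruct S; [congruence|]. simpl; auto.
Qed.

Lemma Sd_0 S : S <> nil -> In 0%nat (Sd S).
Proof. intros H. unfold Sd. replace 0%nat with (minS S - minS S)%nat by lia. apply (in_map (fun e => (e - minS S)%nat)), minS_in; auto. Qed.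

Lemma maxS_ge S e : In e S -> (e <= maxS S)%nat.
Proof. induction S; simpl; intros H; [tauto|]. destruct H; [subst; lia|]. specialize (IHS H); lia. Qed.

Lemma Sd_le S d : In d (Sd S) -> (d <= maxS S)%nat.
Proof. unfold Sd. intros H. apply in_map_iff in H. destruct H as [e [He1 He]]. apply maxS_ge in He. lia. Qed.

Lemma gS_decomp S t : gS S t = t ^ (2 * minS S) * P0 (Sd S) t.
Proof.
  assert (H : forall e, In e S -> (minS S <= e)%nat) by apply minS_le.
  unfold Sd. generalize (minS S) H. clear H. intros m H. induction S as [|e S IH].
  - simpl. unfold P0; simpl; ring.
  - change (t ^ (2 * e) + gS S t = t ^ (2 * m) * (t ^ (2 * (e - m)) + P0 (map (fun e => (e - m)%nat) S) t)).
    rewrite IH by (intros; apply H; simpl; auto).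
    assert (m <= e)%nat by (apply H; simpl; auto).
    replace (2 * e)%nat with (2 * m + 2 * (e - m))%nat by lia. rewrite pow_add. ring.
Qed.

Lemma P0_ge1 S t : S <> nil -> 1 <= P0 (Sd S) t.
Proof.
  intros H. apply lsum_ge1. intros d. rewrite pow_mult. apply pow_le. nra.
  apply Sd_0; auto. reflexivity.
Qed.

Lemma isd_comp_R (f g : R -> R) x df dg : is_derive f (g x) df -> is_derive g x dg ->
  is_derive (fun s => f (g s)) x (dg * df).
Proof. intros; apply (is_derive_comp f g x df dg); auto. Qed.

Definition D1 S t := (2 * INR (minS S) + P1 (Sd S) t / P0 (Sd S) t) / t.

Lemma lnderiv S t : S <> nil -> 0 < t -> is_derive (fun s => ln (gS S s)) t (D1 S t).
Proof.
  intros HS Ht. pose proof (P0_ge1 S t HS).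
  assert (Hp : 0 < t ^ (2 * minS S)) by (apply pow_lt; auto).
  eapply isd_ext.
  - apply (isd_comp_R ln (gS S)).
    + apply is_derive_ln. rewrite gS_decomp. apply Rmult_lt_0_compat; lra.
    + eapply is_derive_ext. intros s; symmetry; apply gS_decomp.
      apply isd_mult. apply pow_deriv_term; lra. apply P0_deriv; lra.
  - rewrite (gS_decomp S t). unfold D1. field. lra.
Qed.

Lemma D1_deriv S t : S <> nil -> 0 < t -> exists d2, is_derive (D1 S) t d2 /\
   d2 + D1 S t / t = Qf (Sd S) t / (P0 (Sd S) t) ^ 2.
Proof.
  intros HS Ht. pose proof (P0_ge1 S t HS).
  eexists; split.
  - unfold D1. apply is_derive_div.
    + apply isd_plus. apply is_derive_Reals, derivable_pt_lim_const.
      apply is_derive_div. apply P1_deriv; lra. apply P0_deriv; lra. lra.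
    + apply is_derive_Reals, derivable_pt_lim_id.
    + lra.
  - assert (E := lagrange (Sd S) t).
    assert (Qf (Sd S) t = (P0 (Sd S) t * P2 (Sd S) t - P1 (Sd S) t * P1 (Sd S) t) / t ^ 2).
    { rewrite E. field. lra. }
    rewrite H0. unfold D1. field. lra.
Qed.

Definition phi S t := sqrt (Qf (Sd S) t / (P0 (Sd S) t) ^ 2).
Definition hh S t := 2 * lsum (Sd S) (fun d => INR d * t ^ (pred d)).
Definition HH S t := 2 * lsum (Sd S) (fun d => t ^ d).

Lemma pow_cont n x : continuous (fun s : R => s ^ n) x.
Proof. apply (@ex_derive_continuous R_AbsRing R_NormedModule). eexists. apply is_derive_Reals, derivable_pt_lim_pow. Qed.

Lemma cmult_cont (c : R) (f : R -> R) x : continuous f x -> continuous (fun s => c * f s) x.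
Proof. intros H. apply (continuous_mult (fun _ => c) f); auto. apply continuous_const. Qed.

Lemma P0_cont L x : continuous (P0 L) x.
Proof. unfold P0. apply (lsum_cont L (fun d s => s ^ (2 * d))). intros; apply pow_cont. Qed.

Lemma Qf_cont L x : continuous (Qf L) x.
Proof.
  unfold Qf. apply (lsum_cont L (fun i s => lsum L (fun j => 2 * (INR i - INR j) ^ 2 * s ^ (2 * i + 2 * j - 2)))).
  intros i. apply (lsum_cont L (fun j s => 2 * (INR i - INR j) ^ 2 * s ^ (2 * i + 2 * j - 2))).
  intros j. apply cmult_cont, pow_cont.
Qed.

Lemma phi_cont S x : S <> nil -> continuous (phi S) x.
Proof.
  intros HS. unfold phi. apply continuous_sqrt_comp.
  apply (continuous_mult (Qf (Sd S)) (fun s => / (P0 (Sd S) s ^ 2))). apply Qf_cont.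
  apply continuous_Rinv_comp.
  apply (continuous_mult (P0 (Sd S)) (fun s => P0 (Sd S) s ^ 1)). apply P0_cont.
  apply (continuous_mult (P0 (Sd S)) (fun s => 1)). apply P0_cont. apply continuous_const.
  pose proof (P0_ge1 S x HS). nra.
Qed.

Lemma hh_cont S x : continuous (hh S) x.
Proof.
  unfold hh. apply cmult_cont.
  apply (lsum_cont (Sd S) (fun d s => INR d * s ^ pred d)). intros; apply cmult_cont, pow_cont.
Qed.

Lemma HH_deriv S x : is_derive (HH S) x (hh S x).
Proof.
  unfold HH, hh. apply is_derive_scal.
  apply (lsum_derive (Sd S) (fun d s => s ^ d)). intros; apply is_derive_Reals, derivable_pt_lim_pow.
Qed.

Lemma phi_le S t : S <> nil -> 0 < t -> phi S t <= hh S t.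
Proof.
  intros HS Ht. pose proof (P0_ge1 S t HS) as H1.
  set (L := Sd S). fold L in H1.
  assert (Hh : 0 <= hh S t).
  { unfold hh. apply Rmult_le_pos. lra. apply lsum_nonneg. intros d.
    apply Rmult_le_pos. apply pos_INR. apply pow_le; lra. }
  assert (HP2 : 0 <= P2 L t).
  { unfold P2. apply lsum_nonneg. intros d. pose proof (pos_INR d).
    rewrite pow_mult. assert (0 <= (t^2)^d) by (apply pow_le; nra). nra. }
  assert (HP2b : P2 L t <= (t * hh S t) ^ 2).
  { assert (Eh : t * hh S t = lsum L (fun d => 2 * INR d * t ^ d)).
    { unfold hh. fold L. rewrite lsum_mult_l, lsum_mult_l. apply lsum_ext. intros [|d]. simpl; ring. simpl; ring. }
    rewrite Eh.
    unfold P2. simpl (_ ^ 2). rewrite Rmult_1_r.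
    eapply Rle_trans; [|apply lsum_sq].
    - apply Req_le, lsum_ext. intros d. rewrite pow_mult. replace (t^2) with (t * t) by ring.
      rewrite Rpow_mult_distr. ring.
    - intros d. pose proof (pos_INR d). assert (0 <= t ^ d) by (apply pow_le; lra). nra. }
  assert (E := lagrange L t).
  assert (HQ : Qf L t <= (P0 L t) ^ 2 * (hh S t) ^ 2).
  { assert (0 <= P1 L t * P1 L t) by nra.
    assert (t ^ 2 * Qf L t <= t ^ 2 * ((P0 L t) ^ 2 * (hh S t) ^ 2)).
    { rewrite <- E. assert (P0 L t * P2 L t <= P0 L t ^ 2 * P2 L t).
      { assert (0 <= P0 L t * P2 L t * (P0 L t - 1)) by (apply Rmult_le_pos; [apply Rmult_le_pos|]; lra).
        replace (P0 L t ^ 2 * P2 L t) with (P0 L t * P2 L t + P0 L t * P2 L t * (P0 L t - 1)) by ring. lra. }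
      assert (P0 L t ^ 2 * P2 L t <= P0 L t ^ 2 * (t * hh S t) ^ 2).
      { apply Rmult_le_compat_l; auto. nra. }
      replace (t ^ 2 * (P0 L t ^ 2 * hh S t ^ 2)) with (P0 L t ^ 2 * (t * hh S t) ^ 2) by ring.
      lra. }
    apply Rmult_le_reg_l with (t ^ 2). nra. lra. }
  unfold phi. fold L. rewrite <- (sqrt_Rsqr (hh S t)) by auto.
  apply sqrt_le_1.
  - apply Rmult_le_pos. unfold Qf. apply lsum_nonneg; intros i; apply lsum_nonneg; intros j. apply Rmult_le_pos. apply Rmult_le_pos. lra. apply pow2_ge_0. apply pow_le; lra. apply Rlt_le, Rinv_0_lt_compat. nra.
  - apply Rle_0_sqr.
  - unfold Rsqr. apply (Rmult_le_reg_r ((P0 L t) ^ 2)). nra. unfold Rdiv. rewrite Rmult_assoc, Rinv_l by nra. nra.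
Qed.

Lemma pow_le1' a d : 0 <= a <= 1 -> a ^ d <= 1.
Proof. intros Ha; induction d; simpl. lra. assert (0 <= a ^ d) by (apply pow_le; lra). nra. Qed.

Lemma bern a d : 0 <= a <= 1 -> 1 - a ^ d <= INR d * (1 - a).
Proof.
  intros Ha. induction d as [|d IH]. simpl; lra.
  rewrite S_INR. simpl. assert (a ^ d <= 1) by (apply pow_le1'; lra).
  assert (0 <= a ^ d) by (apply pow_le; lra). nra.
Qed.

Lemma lsum_le_in L f g : (forall d, In d L -> f d <= g d) -> lsum L f <= lsum L g.
Proof. intros H; induction L; simpl; [lra|]. pose proof (H a (or_introl eq_refl)).
  assert (lsum L f <= lsum L g) by (apply IHL; intros; apply H; simpl; auto). lra. Qed.

Lemma lsum_const L c : lsum L (fun _ => c) = INR (length L) * c.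
Proof. induction L; simpl length; [simpl; ring|]. rewrite S_INR. simpl. rewrite IHL. ring. Qed.

Lemma dl_eq S dl ddl s : S <> nil -> log_derivs (gS S) dl ddl -> 0 < s -> dl s = D1 S s.
Proof.
  intros HS Hlog Hs. destruct (Hlog s Hs) as [H1 _]. apply is_derive_Reals in H1.
  rewrite <- (is_derive_unique _ _ _ H1). apply is_derive_unique, lnderiv; auto.
Qed.

Lemma Iop_eq S dl ddl t : S <> nil -> log_derivs (gS S) dl ddl -> 0 < t ->
  sqrt (Iop dl ddl t) = phi S t.
Proof.
  intros HS Hlog Ht. destruct (D1_deriv S t HS Ht) as [d2 [Hd2 Heq]].
  assert (Hd2' : is_derive dl t d2).
  { apply (is_derive_ext_loc (D1 S) dl t d2); auto.
    exists (mkposreal t Ht). intros s Hs. change (Rabs (s - t) < t) in Hs.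
    apply Rabs_def2 in Hs. symmetry. apply (dl_eq S dl ddl); auto. lra. }
  destruct (Hlog t Ht) as [_ H2]. apply is_derive_Reals in H2.
  assert (ddl t = d2) by (rewrite <- (is_derive_unique _ _ _ H2); apply is_derive_unique; auto).
  unfold Iop, phi. rewrite H, (dl_eq S dl ddl t); auto. rewrite Heq. reflexivity.
Qed.

Theorem lemma6p1 (S : list nat) (b : R) (dl ddl : R -> R) :
  NoDup S -> S <> nil -> 1 <= b ->
  log_derivs (gS S) dl ddl ->
  exists pr : Riemann_integrable (fun t => sqrt (Iop dl ddl t)) (1 - 1 / b) 1,
    RiemannInt pr <= 2 * (INR (length S) + 1) * INR (maxS S) / b.
Proof.
  intros _ HS Hb Hlog.
  assert (Hib : 0 < 1 / b <= 1).
  { split. apply Rdiv_lt_0_compat; lra. apply Rmult_le_reg_r with b. lra.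
    unfold Rdiv. rewrite Rmult_assoc, Rinv_l by lra. lra. }
  set (a := 1 - 1 / b).
  assert (Ha : 0 <= a < 1) by (unfold a; lra).
  assert (Hmin : Rmin a 1 = a) by (apply Rmin_left; lra).
  assert (Hmax : Rmax a 1 = 1) by (apply Rmax_right; lra).
  assert (Hext : forall x, Rmin a 1 < x < Rmax a 1 -> phi S x = sqrt (Iop dl ddl x)).
  { intros x Hx. rewrite Hmin in Hx. symmetry. apply Iop_eq; auto. lra. }
  assert (Hphi : ex_RInt (phi S) a 1).
  { apply (@ex_RInt_continuous R_CompleteNormedModule). intros; apply phi_cont; auto. }
  assert (Hex : ex_RInt (fun t => sqrt (Iop dl ddl t)) a 1).
  { apply (ex_RInt_ext (phi S)); auto. }
  exists (ex_RInt_Reals_0 _ _ _ Hex).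
  rewrite <- RInt_Reals.
  rewrite <- (RInt_ext (phi S)) by auto.
  assert (Hhh : is_RInt (hh S) a 1 (minus (HH S 1) (HH S a))).
  { apply (@is_RInt_derive R_CompleteNormedModule). intros; apply HH_deriv. intros; apply hh_cont. }
  eapply Rle_trans.
  { apply (RInt_le (phi S) (hh S)). lra. auto. eexists; eauto.
    intros x Hx. apply phi_le; auto; lra. }
  rewrite (is_RInt_unique _ _ _ _ Hhh).
  change (minus (HH S 1) (HH S a)) with (HH S 1 - HH S a).
  unfold HH. rewrite <- Rmult_minus_distr_l, <- lsum_minus.
  assert (HM : lsum (Sd S) (fun d => 1 ^ d - a ^ d) <= lsum (Sd S) (fun _ => INR (maxS S) / b)).
  { apply lsum_le_in. intros d Hd. rewrite pow1.
    eapply Rle_trans. apply bern; lra.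
    replace (1 - a) with (1 / b) by (unfold a; ring).
    unfold Rdiv. rewrite !Rmult_1_l. apply Rmult_le_compat_r. lra.
    apply le_INR, Sd_le; auto. }
  rewrite lsum_const in HM. unfold Sd in HM. rewrite length_map in HM.
  assert (0 <= INR (maxS S) / b) by (apply Rdiv_le_0_compat; [apply pos_INR | lra]).
  unfold Sd. unfold Rdiv in *. nra.
Qed.
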